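(* Let $x_0\in\mathcal H$ and $a\in\mathbb R^m_+$, and assume that $\mathcal{LP}_w(F,F(x))\neq\emptyset$ for every $x\in\mathcal L(F,F(x_0)+a)$. Then for every $x\in\mathcal L(F,F(x_0)+a)$, $$\varphi(x)=\sup_{z\in\mathcal{LP}_w(F,F(x_0)+a)}\ \min_{i=1,\dots,m}\big(f_i(x)-f_i(z)\big).$$
   Context: $\mathcal H$ is a real Hilbert space with inner product $\langle\cdot,\cdot\rangle$ and norm $\|\cdot\|$. $f_1,\dots,f_m:\mathcal H\to\mathbb R$ are convex and continuously differentiable, and $F=(f_1,\dots,f_m)^\top$. A point $x^*\in\mathcal H$ is weak Pareto optimal if there is no $x\in\mathcal H$ with $f_i(x)<f_i(x^* )$ for all $i=1,\dots,m$; $\mathcal P_w$ denotes the set of weak Pareto optimal points. For $a\in\mathbb R^m$, $\mathcal L(F,a):=\{x\in\mathcal H: f_i(x)\le a_i \text{ for all } i\}$ and $\mathcal{LP}_w(F,a):=\mathcal L(F,a)\cap\mathcal P_w$. The merit function is $\varphi(x):=\sup_{z\in\mathcal H}\min_{i=1,\dots,m}(f_i(x)-f_i(z))$. *)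

(* Defs.v *)
From HB Require Import structures.
From mathcomp Require Import all_boot all_order all_algebra.
From mathcomp Require Import all_classical all_reals all_analysis.
Set Implicit Arguments. Unset Strict Implicit. Unset Printing Implicit Defensive.
Import Order.TTheory GRing.Theory Num.Theory.
Import numFieldNormedType.Exports.
Local Open Scope classical_set_scope.
Local Open Scope ring_scope.

(* A real Hilbert space is a complete normed space H over R whose norm comes
   from an inner product [ip]: symmetric, linear in the first argument, and
   with <x,x> = ||x||^2 (positive definiteness follows from the norm). *)
Definition is_inner_product (R : realType) (H : normedModType R)
    (ip : H -> H -> R) : Prop :=
  (forall x y, ip x y = ip y x) /\
  (forall (a : R) (x y z : H), ip (a *: x + y) z = a * ip x z + ip y z) /\
  (forall x, ip x x = `|x| ^+ 2).

Definition convex_fun (R : realType) (H : normedModType R) (f : H -> R) : Prop :=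
  forall (x y : H) (t : R), 0 <= t -> t <= 1 ->
    f (t *: x + (1 - t) *: y) <= t * f x + (1 - t) * f y.

(* Continuous (Fréchet) differentiability: f is differentiable at every point
   and its derivative is represented (Riesz) by a gradient map that is
   continuous from H to H. *)
Definition C1_fun (R : realType) (H : normedModType R) (ip : H -> H -> R)
    (f : H -> R^o) : Prop :=
  exists g : H -> H, continuous g /\
    forall x, differentiable f x /\ forall h, 'd f x h = ip (g x) h.

Definition sublevel (R : realType) (H : Type) (m : nat)
    (F : 'I_m -> H -> R) (a : 'I_m -> R) : set H :=
  [set x | forall i, F i x <= a i].

Definition weak_pareto (R : realType) (H : Type) (m : nat)
    (F : 'I_m -> H -> R) : set H :=
  [set xs | ~ exists x, forall i, F i x < F i xs].

Definition LPw (R : realType) (H : Type) (m : nat)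
    (F : 'I_m -> H -> R) (a : 'I_m -> R) : set H :=
  sublevel F a `&` weak_pareto F.

(* min_i (f_i(x) - f_i(z)), as an extended real (m >= 1 in use). *)
Definition minGap (R : realType) (H : Type) (m : nat)
    (F : 'I_m -> H -> R) (x z : H) : \bar R :=
  \big[Order.min/+oo%E]_(i < m) ((F i x - F i z)%:E).

Definition merit (R : realType) (H : Type) (m : nat)
    (F : 'I_m -> H -> R) (x : H) : \bar R :=
  ereal_sup [set minGap F x z | z in [set: H]].

(* Main.v *)
Require Import Defs.
From HB Require Import structures.
From mathcomp Require Import all_boot all_order all_algebra.
From mathcomp Require Import all_classical all_reals all_analysis.
Import Order.TTheory GRing.Theory Num.Theory.
Import numFieldNormedType.Exports.
Local Open Scope classical_set_scope.
Local Open Scope ring_scope.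

Theorem mainTheorem1 (R : realType) (H : completeNormedModType R)
    (ip : H -> H -> R) (m : nat) (F : 'I_m -> H -> R^o)
    (hip : is_inner_product ip) (hm : (0 < m)%N)
    (hconv : forall i, convex_fun (F i)) (hC1 : forall i, C1_fun ip (F i))
    (x0 : H) (a : 'I_m -> R) (ha : forall i, 0 <= a i)
    (hne : forall x, sublevel F (fun i => F i x0 + a i) x ->
             LPw F (fun i => F i x) !=set0) :
  forall x, sublevel F (fun i => F i x0 + a i) x ->
    merit F x =
    ereal_sup [set minGap F x z | z in LPw F (fun i => F i x0 + a i)].
Proof.
move=> x hx.
apply/eqP; rewrite eq_le; apply/andP; split; last first.
  by apply: ereal_sup_le => _ [z _ <-]; exists z.
apply: ge_ereal_sup => _ [z _ <-].
have [w [hw hzw]] : exists w, (forall i, (F i w <= F i x)%R) /\ (minGap F x z <= minGap F x w)%E.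
  have [hz|hz] := pselect (forall i, F i z <= F i x).
    by exists z.
  exists x; split => //.
  have [i hi] : exists i, ~ F i z <= F i x.
    by apply: contra_notP hz => h i; apply: contra_notP (h) => h'; exists i.
  have hlt : F i x < F i z by rewrite ltNge; apply/negP.
  apply: (@le_trans _ _ (F i x - F i z)%:E).
    exact: bigmin_le.
  apply: (@le_trans _ _ 0%E).
    by rewrite lee_fin subr_le0 ltW.
  apply: le_bigmin; first exact: leey.
  move=> j _.
  by rewrite subrr.
have hwL : sublevel F (fun i => F i x0 + a i) w.
  by move=> i; apply: le_trans (hw i) (hx i).
have [z' [hz'1 hz'2]] := hne w hwL.
apply: (@le_trans _ _ (minGap F x z')).
  apply: (le_trans hzw).
  apply: le_bigmin; first exact: leey.
  move=> i _.
  apply: (le_trans (bigmin_le _ i _)).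
  by rewrite lee_fin lerD2l lerN2.
apply: ereal_sup_ubound; exists z' => //; split => //.
by move=> i; apply: le_trans (hz'1 i) (hwL i).
Qed.
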